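(* Let $V$ be a vector space over a field $\mathbb{K}$ of characteristic $0$, let $F$ be a bilinear form on $V$, and set $a_F=a_1^F$. Then $\lambda_F=\exp(a_F)=\sum_{n\ge0}\frac{1}{n!}a_F^n$, where the series is finite when applied to any element of $\mathcal{T}(V)$.
   Context: $\mathcal{T}(V)$ is the tensor algebra of $V$. $a_1^F$ is the linear map on $\mathcal{T}(V)$ with $a_1^F(x_1\otimes\cdots\otimes x_p)=0$ for $p<2$ and $a_1^F(x_1\otimes\cdots\otimes x_p)=\sum_{1\le i<j\le p}(-1)^{i+j-1}F(x_i,x_j)\,x_1\otimes\cdots\widehat{x_i}\cdots\widehat{x_j}\cdots\otimes x_p$ for $p\ge2$. For $f\in V^*$, $i_f$ is the unique linear map on $\mathcal{T}(V)$ with $i_f(1)=0$ and $i_f(x\otimes u)=f(x)u-x\otimes i_f(u)$ ($x\in V$); $i_x^F:=i_{f_x}$ with $f_x(y)=F(x,y)$. $\Lambda_F:\mathcal{T}(V)\to\mathrm{End}(\mathcal{T}(V))$ is the unique unital algebra homomorphism with $\Lambda_F(x)(u)=x\otimes u+i_x^F(u)$ for $x\in V$, and $\lambda_F(u):=\Lambda_F(u)(1)$. *)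

(* Defs.v *)
From HB Require Import structures.
From mathcomp Require Import all_boot all_order all_algebra.
Set Implicit Arguments.
Unset Strict Implicit.
Unset Printing Implicit Defensive.
Import Order.TTheory GRing.Theory Num.Theory.
Local Open Scope ring_scope.

Definition lin (K : fieldType) (U W : lmodType K) (f : U -> W) : Prop :=
  forall (k : K) (x y : U), f (k *: x + y) = k *: f x + f y.

Definition alg_hom_ext (K : fieldType) (V : lmodType K) (T A : algType K)
    (iota : V -> T) (f : V -> A) (g : T -> A) : Prop :=
  [/\ lin g, g 1 = 1, (forall u v, g (u * v) = g u * g v)
    & (forall x, g (iota x) = f x)].

Definition is_tensor_algebra (K : fieldType) (V : lmodType K) (T : algType K)
    (iota : V -> T) : Prop :=
  lin iota /\
  forall (A : algType K) (f : V -> A), lin f ->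
    (exists g : T -> A, alg_hom_ext iota f g) /\
    (forall g1 g2 : T -> A, alg_hom_ext iota f g1 -> alg_hom_ext iota f g2 ->
       g1 =1 g2).

Definition pure (K : fieldType) (V : lmodType K) (T : algType K)
    (iota : V -> T) (xs : seq V) : T :=
  \prod_(x <- xs) iota x.

Definition rem2 (K : fieldType) (V : lmodType K) (xs : seq V) (i j : nat)
  : seq V :=
  [seq nth 0 xs k | k <- iota 0 (size xs) & (k != i) && (k != j)].

(* defining property of a_1^F (indices 0-based: (-1)^(i+j-1) with 1-based
   indices equals (-1)^(i+j+1) with 0-based ones); for p < 2 the sum is empty *)
Definition is_a1F (K : fieldType) (V : lmodType K) (T : algType K)
    (iota : V -> T) (F : V -> V -> K) (a : T -> T) : Prop :=
  lin a /\
  forall xs : seq V,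
    a (pure iota xs) =
    \sum_(j < size xs) \sum_(i < j)
       ((-1) ^+ (i + j + 1) * F (nth 0 xs i) (nth 0 xs j))
         *: pure iota (rem2 xs i j).

(* defining property of the family i^F_x = i_{f_x}, f_x = F(x, .) *)
Definition is_iF (K : fieldType) (V : lmodType K) (T : algType K)
    (iota : V -> T) (F : V -> V -> K) (ix : V -> T -> T) : Prop :=
  forall x : V,
    [/\ lin (ix x), ix x 1 = 0
      & forall (y : V) (u : T), ix x (iota y * u) = F x y *: u - iota y * ix x u].

Definition is_LambdaF (K : fieldType) (V : lmodType K) (T : algType K)
    (iota : V -> T) (ix : V -> T -> T) (L : T -> T -> T) : Prop :=
  [/\ forall u, lin (L u),
      forall (k : K) (u v w : T), L (k *: u + v) w = k *: L u w + L v w,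
      forall w, L 1 w = w,
      forall u v w, L (u * v) w = L u (L v w)
    & forall (x : V) (w : T), L (iota x) w = iota x * w + ix x w].

Definition bilinear_form (K : fieldType) (V : lmodType K) (F : V -> V -> K)
  : Prop :=
  forall (k : K) (x y z : V),
    F (k *: x + y) z = k * F x z + F y z /\
    F z (k *: x + y) = k * F z x + F z y.

(* Main.v *)
Require Import Defs.
From HB Require Import structures.
From mathcomp Require Import all_boot all_order all_algebra.
From mathcomp Require Import boolp.
Import Order.TTheory GRing.Theory Num.Theory.
Local Open Scope ring_scope.
Section Span.
Variables (K : fieldType) (V : lmodType K) (T : algType K) (io : V -> T).

Definition spanned (u : T) : Prop :=
  exists s : seq (K * seq V), u = \sum_(p <- s) p.1 *: pure io p.2.

Definition spanP : {pred T} := fun u => `[< spanned u >].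

Lemma spanP_closed : subalg_closed spanP.
Proof.
split.
- apply/asboolP; exists [:: (1, [::])]; by rewrite big_seq1 /pure big_nil scale1r.
- move=> k u v /asboolP[s1 ->] /asboolP[s2 ->]; apply/asboolP.
  exists ([seq (k * p.1, p.2) | p <- s1] ++ s2).
  rewrite big_cat big_map /= scaler_sumr; congr (_ + _).
  by apply: eq_bigr => p _; rewrite scalerA.
- move=> u v /asboolP[s1 ->] /asboolP[s2 ->]; apply/asboolP.
  exists [seq (p.1 * q.1, p.2 ++ q.2) | p <- s1, q <- s2].
  rewrite big_allpairs_dep mulr_suml; apply: eq_bigr => p _.
  rewrite mulr_sumr; apply: eq_bigr => q _ /=.
  by rewrite /pure big_cat /= -scalerAl -scalerAr scalerA.
Qed.

HB.instance Definition _ := GRing.isSubalgClosed.Build K T spanP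
  (GRing.subalg_closed_semi spanP_closed).

Record spanT := SpanT { spval : T; _ : spval \in spanP }.
HB.instance Definition _ := [isSub for spval].
HB.instance Definition _ := [Choice of spanT by <:].
HB.instance Definition _ := [SubChoice_isSubAlgebra of spanT by <:].

Lemma spanned_all : is_tensor_algebra io -> forall u, spanned u.
Proof.
move=> [lio univ] u.
have iom : forall x, io x \in spanP.
  move=> x; apply/asboolP; exists [:: (1, [:: x])].
  by rewrite big_seq1 /pure big_seq1 scale1r.
pose f x : spanT := @SpanT (io x) (iom x).
have linf : lin f by move=> k x y; apply: val_inj => /=; rewrite lio.
have [[g [lg g1 gM gio]] _] := univ spanT f linf.
have [_ uniqT] := univ T io lio.
have H : (fun w => spval (g w)) =1 id.
  apply: uniqT; split => //.
  + by move=> k x y; rewrite lg.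
  + by rewrite g1.
  + by move=> x y; rewrite gM.
  + by move=> x; rewrite gio.
rewrite -(H u) /=; case: (g u) => w /= /asboolP; done.
Qed.
End Span.
Lemma filter_cons (K : fieldType) (V : lmodType K) (P : pred nat) (y : V) ys :
  [seq nth 0 (y :: ys) k | k <- iota 0 (size ys).+1 & P k] =
  (if P 0%N then [:: y] else [::]) ++
  [seq nth 0 ys k | k <- iota 0 (size ys) & P k.+1].
Proof.
rewrite /= -[1%N]/(1+0)%N iotaDl filter_map.
by case: (P 0%N); rewrite /= -map_comp.
Qed.

Section Main.
Variables (K : fieldType) (V : lmodType K) (T : algType K)
    (io : V -> T) (F : V -> V -> K) (a : T -> T) (ix : V -> T -> T).
Hypothesis Ha : is_a1F io F a.
Hypothesis Hi : is_iF io F ix.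

Definition rem1 (xs : seq V) (j : nat) : seq V :=
  [seq nth 0 xs k | k <- iota 0 (size xs) & k != j].

Lemma rem1_0 (y : V) ys : rem1 (y :: ys) 0 = ys.
Proof.
rewrite /rem1 filter_cons /=.
rewrite (eq_filter (a2 := predT)) // filter_predT.
by rewrite -[RHS](mkseq_nth 0).
Qed.

Lemma rem1_S (y : V) ys j : rem1 (y :: ys) j.+1 = y :: rem1 ys j.
Proof. by rewrite /rem1 filter_cons. Qed.

Lemma rem2_0S (y : V) ys j : rem2 (y :: ys) 0 j.+1 = rem1 ys j.
Proof. by rewrite /rem2 filter_cons. Qed.

Lemma rem2_SS (y : V) ys i j : rem2 (y :: ys) i.+1 j.+1 = y :: rem2 ys i j.
Proof. by rewrite /rem2 filter_cons. Qed.

Lemma pure_cons y ys : pure io (y :: ys) = io y * pure io ys.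
Proof. by rewrite /pure big_cons. Qed.

Lemma ix_lin x : lin (ix x).
Proof. by case: (Hi x). Qed.

Lemma ix0 x : ix x 0 = 0.
Proof.
have := ix_lin x 1 0 0; rewrite scale1r addr0 => /eqP.
by rewrite -subr_eq0 scale1r opprD addrA subrr add0r oppr_eq0 => /eqP.
Qed.

Lemma ixD x u v : ix x (u + v) = ix x u + ix x v.
Proof. by rewrite -[u]scale1r ix_lin !scale1r. Qed.

Lemma ixZ x k u : ix x (k *: u) = k *: ix x u.
Proof. by rewrite -[k *: u]addr0 ix_lin ix0 addr0. Qed.

Lemma ix_sum x I (r : seq I) (P : pred I) (G : I -> T) :
  ix x (\sum_(i <- r | P i) G i) = \sum_(i <- r | P i) ix x (G i).
Proof.
elim/big_rec2: _ => [|i y1 y2 _ <-]; first exact: ix0.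
by rewrite ixD.
Qed.

Lemma ix_pure x ys :
  ix x (pure io ys) = \sum_(j < size ys)
     ((-1) ^+ j * F x (nth 0 ys j)) *: pure io (rem1 ys j).
Proof.
elim: ys => [|y ys IH].
  by rewrite /pure big_nil big_ord0; case: (Hi x).
rewrite pure_cons; case: (Hi x) => _ _ ->.
rewrite IH big_ord_recl /= expr0 mul1r rem1_0; congr (_ + _).
rewrite mulr_sumr -sumrN; apply: eq_bigr => j _.
rewrite /bump /= rem1_S pure_cons exprS mulN1r mulNr scaleNr -scalerAr.
by [].
Qed.

Lemma a_cons x ys :
  a (pure io (x :: ys)) = io x * a (pure io ys) + ix x (pure io ys).
Proof.
have [la Hf] := Ha.
rewrite !Hf ix_pure /= big_ord_recl big_ord0 add0r.
rewrite mulr_sumr addrC -big_split /=; apply: eq_bigr => j _.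
rewrite /bump /= add1n big_ord_recl /= rem2_0S.
rewrite !add0n; congr (_ + _).
  by rewrite addn1 !exprS !mulN1r opprK.
rewrite mulr_sumr; apply: eq_bigr => i _.
rewrite /bump /= add1n rem2_SS pure_cons -scalerAr; congr (_ *: _).
rewrite add0n; congr (_ * _); first by rewrite addSn addnS !addn1 addn0 addnS !exprS !mulN1r !opprK.
Qed.

Section LinGen.
Variable f : T -> T.
Hypothesis lf : lin f.
Lemma lin0 : f 0 = 0.
Proof.
have := lf 1 0 0; rewrite scale1r addr0 => /eqP.
by rewrite -subr_eq0 scale1r opprD addrA subrr add0r oppr_eq0 => /eqP.
Qed.
Lemma linD u v : f (u + v) = f u + f v.
Proof. by rewrite -[u]scale1r lf !scale1r. Qed.
Lemma linZ k u : f (k *: u) = k *: f u.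
Proof. by rewrite -[k *: u]addr0 lf lin0 addr0. Qed.
Lemma linN u : f (- u) = - f u.
Proof. by rewrite -scaleN1r linZ scaleN1r. Qed.
Lemma linB u v : f (u - v) = f u - f v.
Proof. by rewrite linD linN. Qed.
Lemma lin_sum I (r : seq I) (P : pred I) (G : I -> T) :
  f (\sum_(i <- r | P i) G i) = \sum_(i <- r | P i) f (G i).
Proof.
elim/big_rec2: _ => [|i y1 y2 _ <-]; first exact: lin0.
by rewrite linD.
Qed.
End LinGen.

Lemma lin_comp (f g : T -> T) : lin f -> lin g -> lin (fun u => f (g u)).
Proof. by move=> lf lg k u v; rewrite lg lf. Qed.
Lemma lin_add (f g : T -> T) : lin f -> lin g -> lin (fun u => f u + g u).
Proof.
move=> lf lg k u v; rewrite lf lg scalerDr.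
by rewrite -!addrA; congr (_ + _); rewrite addrCA.
Qed.
Lemma lin_opp (f : T -> T) : lin f -> lin (fun u => - f u).
Proof. by move=> lf k u v; rewrite lf opprD scalerN. Qed.
Lemma lin_mull c : lin (fun u : T => c * u).
Proof. by move=> k u v; rewrite mulrDr scalerAr. Qed.
Lemma lin_iter (f : T -> T) n : lin f -> lin (iter n f).
Proof. move=> lf; elim: n => [|n IH] k u v; first by []. by rewrite !iterS IH lf. Qed.

Hypothesis Htens : is_tensor_algebra io.

Lemma lin_ext0 (h : T -> T) : lin h -> (forall ws, h (pure io ws) = 0) -> forall u, h u = 0.
Proof.
move=> lh H u; have [s ->] := @spanned_all K V T io Htens u.
rewrite lin_sum //; apply: big1 => p _; by rewrite linZ // H scaler0.
Qed.

Lemma lin_ext (f g : T -> T) : lin f -> lin g -> (forall ws, f (pure io ws) = g (pure io ws)) ->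
  forall u, f u = g u.
Proof.
move=> lf lg H u; apply/eqP; rewrite -subr_eq0; apply/eqP.
apply: (@lin_ext0 (fun u => f u - g u)) => [|ws]; last by rewrite H subrr.
apply: lin_add => //; exact: lin_opp.
Qed.

Lemma a_lin : lin a. Proof. by case: Ha. Qed.

Lemma a_ioL x u : a (io x * u) = io x * a u + ix x u.
Proof.
apply: (@lin_ext (fun u => a (io x * u)) (fun u => io x * a u + ix x u)).
- by apply: lin_comp; [exact: a_lin | exact: lin_mull].
- apply: lin_add; last exact: ix_lin.
  by apply: lin_comp; [exact: lin_mull | exact: a_lin].
- move=> ws; by rewrite -pure_cons a_cons.
Qed.

Lemma ix_cons x y u : ix x (io y * u) = F x y *: u - io y * ix x u.
Proof. by case: (Hi x). Qed.

Lemma ix_anti x y u : ix x (ix y u) = - ix y (ix x u).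
Proof.
apply: (@lin_ext (fun u => ix x (ix y u)) (fun u => - ix y (ix x u))).
- by apply: lin_comp; apply: ix_lin.
- by apply: lin_opp; apply: lin_comp; apply: ix_lin.
elim=> [|z ws IH].
  by rewrite /pure big_nil; case: (Hi y) => _ -> _; case: (Hi x) => _ -> _; rewrite !ix0 oppr0.
rewrite pure_cons !ix_cons !(@linB _ (ix_lin _)) !(@linZ _ (ix_lin _)) !ix_cons IH.
by rewrite mulrN !opprB addrA.
Qed.

Lemma a1 : a 1 = 0.
Proof. by have [_ Hf] := Ha; have := Hf [::]; rewrite /pure big_nil big_ord0. Qed.

Lemma ix1 x : ix x 1 = 0.
Proof. by case: (Hi x). Qed.

Lemma a_ix x u : a (ix x u) = ix x (a u).
Proof.
apply: (@lin_ext (fun u => a (ix x u)) (fun u => ix x (a u))).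
- by apply: lin_comp; [exact: a_lin | exact: ix_lin].
- by apply: lin_comp; [exact: ix_lin | exact: a_lin].
elim=> [|z ws IH].
  by rewrite /pure big_nil ix1 a1 (@lin0 _ a_lin) ix0.
rewrite pure_cons ix_cons (@linB _ a_lin) (@linZ _ a_lin) !a_ioL.
rewrite (@linD _ (ix_lin _)) ix_cons IH ix_anti.
by rewrite opprB addrCA addrC.
Qed.

Lemma iter_ioL n x u :
  iter n a (io x * u) = io x * iter n a u + n%:R *: ix x (iter n.-1 a u).
Proof.
elim: n => [|n IH]; first by rewrite scale0r addr0.
rewrite iterS IH (@linD _ a_lin) (@linZ _ a_lin) a_ioL a_ix -addrA; congr (_ + _).
case: n {IH} => [|n]; first by rewrite scale0r addr0 scale1r.
by rewrite -iterS /= [in RHS]mulrS scalerDl scale1r.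
Qed.

Lemma iter0 n : iter n a 0 = 0.
Proof. exact: (@lin0 _ (@lin_iter a n a_lin)). Qed.

Lemma nil_pure ws n : (size ws < n)%N -> iter n a (pure io ws) = 0.
Proof.
elim: ws n => [|x ws IH] n /=.
  by case: n => // n _; rewrite /pure big_nil iterSr a1 iter0.
move=> hn; rewrite pure_cons iter_ioL IH; last by apply: ltn_trans hn.
case: n hn => // n hn /=; rewrite IH // mulr0 ix0 scaler0 addr0 //.
Qed.

Variable L : T -> T -> T.
Hypothesis HL : is_LambdaF io ix L.
Hypothesis Hchar : [pchar K] =i pred0.

Definition E u M := \sum_(n < M) (n`!%:R)^-1 *: iter n a u.

Lemma E_stable u N : (forall n, (N <= n)%N -> iter n a u = 0) ->
  forall M, (N <= M)%N -> E u M = E u N.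
Proof.
move=> Hu; elim=> [|M IH]; first by rewrite leqn0 => /eqP ->.
rewrite leq_eqVlt => /orP[/eqP -> //|]; rewrite ltnS => hNM.
by rewrite /E big_ord_recr /= Hu // scaler0 addr0 -/(E u M) IH.
Qed.

Lemma fact_inv m :
  ((m.+1)`!%:R)^-1 * (m.+1)%:R = (m`!%:R)^-1 :> K.
Proof.
have h : (m.+1)%:R != 0 :> K by move/pcharf0P: Hchar => ->.
by rewrite factS natrM invfM mulrAC mulVf // mul1r.
Qed.

Lemma L_pure ws M : (size ws < M)%N -> L (pure io ws) 1 = E (pure io ws) M.
Proof.
have [_ _ L1 LM Lio] := HL.
elim: ws M => [|x ws IH] M /=.
  case: M => // M _; rewrite /pure big_nil L1 /E big_ord_recl /= invr1 scale1r.
  by rewrite big1 ?addr0 // => i _; rewrite add0n -iterS iterSr a1 iter0 scaler0.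
move=> hM; rewrite pure_cons LM Lio (IH M); last by apply: ltn_trans hM.
case: M hM => // M hM.
rewrite /E.
symmetry; under eq_bigr => n _ do rewrite iter_ioL scalerDr scalerA scalerAr.
rewrite big_split /= -mulr_sumr; congr (_ + _).
have Hn : forall n, (M <= n)%N -> iter n a (pure io ws) = 0.
  by move=> n hn; apply: nil_pure; apply: leq_trans hn.
rewrite -/(E (pure io ws) M.+1) (@E_stable _ M Hn M.+1 (leqnSn M)).
rewrite big_ord_recl /= mulr0 scale0r add0r /E ix_sum; apply: eq_bigr => i _.
by rewrite /bump /= add1n fact_inv ixZ.
Qed.

Lemma E_lin M : lin (fun u => E u M).
Proof.
move=> k u v; rewrite /E scaler_sumr -big_split; apply: eq_bigr => n _ /=.
by rewrite (@lin_iter a n a_lin) scalerDr !scalerA mulrC.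
Qed.

Lemma main_sec u :
    (exists N : nat, forall n, (N <= n)%N -> iter n a u = 0) /\
    (forall N : nat, (forall n, (N <= n)%N -> iter n a u = 0) ->
       L u 1 = \sum_(n < N) (n`!%:R)^-1 *: iter n a u).
Proof.
have [s ->] := @spanned_all K V T io Htens u.
set M0 := \max_(p <- s) (size p.2).+1.
have hs : forall p, p \in s -> (size p.2 < M0)%N.
  by move=> p hp; exact: (@leq_bigmax_seq _ s xpredT (fun p : K * seq V => (size p.2).+1) p hp isT).
have Hnil : forall n, (M0 <= n)%N ->
    iter n a (\sum_(p <- s) p.1 *: pure io p.2) = 0.
  move=> n hn; rewrite (@lin_sum _ (@lin_iter a n a_lin)) big1_seq // => p /andP[_ hp].
  rewrite (@linZ _ (@lin_iter a n a_lin)) nil_pure ?scaler0 //.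
  by apply: leq_trans (hs p hp) hn.
split; first by exists M0.
move=> N HN.
have [_ Llin _ _ _] := HL.
transitivity (E (\sum_(p <- s) p.1 *: pure io p.2) N); last by [].
rewrite -(@E_stable _ N HN _ (leq_maxl N M0)).
have linL : lin (fun u => L u 1) by move=> k v w; rewrite Llin.
rewrite (@lin_sum _ linL) (@lin_sum _ (E_lin _)); apply: eq_big_seq => p hp.
rewrite (@linZ _ linL) (@linZ _ (E_lin _)) (@L_pure _ (maxn N M0)) //.
by apply: leq_trans (hs p hp) (leq_maxr _ _).
Qed.
End Main.

Theorem mainTheorem7 (K : fieldType) (V : lmodType K) (T : algType K)
    (iota : V -> T) (F : V -> V -> K) (a : T -> T) (ix : V -> T -> T)
    (L : T -> T -> T) :
  [pchar K] =i pred0 ->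
  is_tensor_algebra iota ->
  bilinear_form F ->
  is_a1F iota F a -> is_iF iota F ix -> is_LambdaF iota ix L ->
  forall u : T,
    (exists N : nat, forall n, (N <= n)%N -> iter n a u = 0) /\
    (forall N : nat, (forall n, (N <= n)%N -> iter n a u = 0) ->
       L u 1 = \sum_(n < N) (n`!%:R)^-1 *: iter n a u).
Proof.
move=> Hc Ht _ Ha Hi HL u.
exact: (@main_sec K V T iota F a ix Ha Hi Ht L HL Hc u).
Qed.
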